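(* Let $P, A, B, C$ be points in the Euclidean plane, let $r>0$ and let $Z=\{Q:|PQ|\le r\}$. For a point $Q\notin\{A,B,C\}$, consider the three angles around $Q$ formed by consecutive rays among $QA,QB,QC$ in counterclockwise order (these three angles sum to $2\pi$). Let $P^*\in Z$ be a solution of the Max-Min-Angle problem, i.e. a point of $Z$ maximizing, over $Q\in Z$, the smallest of the angles $\angle AQB,\angle BQC,\angle CQA$ (non-reflex angles in $[0,\pi]$). Suppose that at $P^*$ there are exactly two smallest angles, i.e. two of the three consecutive angles around $P^*$ are equal and strictly smaller than the third. Then $P^*$ lies on the boundary circle $\{Q:|PQ|=r\}$ of $Z$.
   Context: Context: $P$ is the position of a degree-three vertex of a graph drawn with straight-line edges, $A,B,C$ the positions of its neighbours, and $r$ the maximum allowed displacement. *)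

(* Defs.v *)
From Stdlib Require Import Reals.
Open Scope R_scope.

Definition pt := (R * R)%type.

Definition pdist (X Y : pt) : R :=
  sqrt ((fst X - fst Y) ^ 2 + (snd X - snd Y) ^ 2).

(* Non-reflex angle XQY in [0, PI] (requires X <> Q, Y <> Q). *)
Definition angle (X Q Y : pt) : R :=
  let ux := fst X - fst Q in let uy := snd X - snd Q in
  let vx := fst Y - fst Q in let vy := snd Y - snd Q in
  acos ((ux * vx + uy * vy) / (pdist X Q * pdist Y Q)).

(* Counterclockwise angle in [0, 2 PI) from ray QX to ray QY. *)
Definition ccw_angle (Q X Y : pt) : R :=
  let ux := fst X - fst Q in let uy := snd X - snd Q in
  let vx := fst Y - fst Q in let vy := snd Y - snd Q in
  if Rle_dec 0 (ux * vy - uy * vx) then angle X Q Y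
  else 2 * PI - angle X Q Y.

(* If, going
   counterclockwise from QA, ray QB is met no later than QC, the cyclic
   order is A, B, C; otherwise it is A, C, B. *)
Definition consecutive_angles (Q A B C : pt) : R * R * R :=
  if Rle_dec (ccw_angle Q A B) (ccw_angle Q A C)
  then (ccw_angle Q A B, ccw_angle Q B C, 2 * PI - ccw_angle Q A C)
  else (ccw_angle Q A C, ccw_angle Q C B, 2 * PI - ccw_angle Q A B).

Definition exactly_two_smallest (t : R * R * R) : Prop :=
  let '(x, y, z) := t in
  (x = y /\ x < z) \/ (y = z /\ y < x) \/ (z = x /\ z < y).

Definition min_angle (Q A B C : pt) : R :=
  Rmin (angle A Q B) (Rmin (angle B Q C) (angle C Q A)).

Definition not_ABC (Q A B C : pt) : Prop := Q <> A /\ Q <> B /\ Q <> C.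

Definition max_min_angle_solution (P A B C : pt) (r : R) (Pstar : pt) : Prop :=
  pdist P Pstar <= r /\ not_ABC Pstar A B C /\
  forall Q : pt, pdist P Q <= r -> not_ABC Q A B C ->
    min_angle Q A B C <= min_angle Pstar A B C.

(* Main.v *)
Require Import Defs.
From Stdlib Require Import Reals Lra Psatz.
Open Scope R_scope.

Lemma pow2_gt_0 x : x <> 0 -> 0 < x ^ 2.
Proof. intros H. pose proof (Rsqr_pos_lt x H). unfold Rsqr in H0. simpl. lra. Qed.

Definition dotp (X Q Y : pt) : R :=
  (fst X - fst Q) * (fst Y - fst Q) + (snd X - snd Q) * (snd Y - snd Q).
Definition crs (X Q Y : pt) : R :=
  (fst X - fst Q) * (snd Y - snd Q) - (snd X - snd Q) * (fst Y - fst Q).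
Definition sq (X Q : pt) : R := (fst X - fst Q) ^ 2 + (snd X - snd Q) ^ 2.
Definition cs (X Q Y : pt) : R := dotp X Q Y / (pdist X Q * pdist Y Q).

Lemma angle_cs X Q Y : angle X Q Y = acos (cs X Q Y).
Proof. reflexivity. Qed.

Lemma cs_sym X Q Y : cs X Q Y = cs Y Q X.
Proof. unfold cs. rewrite (Rmult_comm (pdist Y Q)). f_equal. unfold dotp; ring. Qed.

Lemma angle_sym X Q Y : angle X Q Y = angle Y Q X.
Proof. rewrite !angle_cs, cs_sym. reflexivity. Qed.

Lemma sq_nonneg X Q : 0 <= sq X Q.
Proof. unfold sq. pose proof (pow2_ge_0 (fst X - fst Q)); pose proof (pow2_ge_0 (snd X - snd Q)); lra. Qed.

Lemma pdist_sq X Q : pdist X Q = sqrt (sq X Q).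
Proof. reflexivity. Qed.

Lemma sq_pos X Q : X <> Q -> 0 < sq X Q.
Proof.
  intros H. destruct X as [x1 x2], Q as [q1 q2]; unfold sq; simpl.
  destruct (Req_dec x1 q1); destruct (Req_dec x2 q2).
  - subst; congruence.
  - assert (0 < (x2-q2)^2) by (apply pow2_gt_0; lra). nra.
  - assert (0 < (x1-q1)^2) by (apply pow2_gt_0; lra). nra.
  - assert (0 < (x2-q2)^2) by (apply pow2_gt_0; lra). nra.
Qed.

Lemma pdist_pos X Q : X <> Q -> 0 < pdist X Q.
Proof. intros H. apply sqrt_lt_R0, sq_pos, H. Qed.

Lemma pdist_neq X Q : 0 < pdist X Q -> X <> Q.
Proof. intros H E; subst. unfold pdist in H. rewrite !Rminus_diag in H.
  replace (0^2+0^2) with 0 in H by ring. rewrite sqrt_0 in H. lra. Qed.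

Lemma lagrange X Q Y : dotp X Q Y ^ 2 + crs X Q Y ^ 2 = sq X Q * sq Y Q.
Proof. unfold dotp, crs, sq. ring. Qed.

Lemma pdist_prod X Q Y : pdist X Q * pdist Y Q = sqrt (sq X Q * sq Y Q).
Proof. rewrite !pdist_sq, sqrt_mult; auto using sq_nonneg. Qed.

Lemma cs_bounds X Q Y : X <> Q -> Y <> Q -> -1 <= cs X Q Y <= 1.
Proof.
  intros H1 H2. unfold cs. rewrite pdist_prod.
  pose proof (sq_pos _ _ H1). pose proof (sq_pos _ _ H2).
  set (S := sq X Q * sq Y Q). assert (HS: 0 < S) by (unfold S; nra).
  pose proof (sqrt_lt_R0 _ HS). pose proof (sqrt_sqrt _ (Rlt_le _ _ HS)).
  pose proof (lagrange X Q Y). fold S in H5.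
  set (d := dotp X Q Y) in *. set (s := sqrt S) in *.
  assert (d^2 <= s^2) by nra.
  assert (-s <= d <= s) by nra.
  split; [apply Rmult_le_reg_r with s; auto; unfold Rdiv; rewrite Rmult_assoc, Rinv_l; lra
         |apply Rmult_le_reg_r with s; auto; unfold Rdiv; rewrite Rmult_assoc, Rinv_l; lra].
Qed.

Lemma cs_lt1 X Q Y : X <> Q -> Y <> Q -> crs X Q Y <> 0 -> cs X Q Y < 1.
Proof.
  intros H1 H2 Hc. unfold cs. rewrite pdist_prod.
  pose proof (sq_pos _ _ H1). pose proof (sq_pos _ _ H2).
  set (S := sq X Q * sq Y Q). assert (HS: 0 < S) by (unfold S; nra).
  pose proof (sqrt_lt_R0 _ HS). pose proof (sqrt_sqrt _ (Rlt_le _ _ HS)).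
  pose proof (lagrange X Q Y). fold S in H5.
  set (d := dotp X Q Y) in *. set (s := sqrt S) in *. set (c := crs X Q Y) in *.
  assert (0 < c^2) by (apply pow2_gt_0; auto).
  assert (d < s) by nra.
  apply Rmult_lt_reg_r with s; auto; unfold Rdiv; rewrite Rmult_assoc, Rinv_l; lra.
Qed.

Lemma cs_gtm1 X Q Y : X <> Q -> Y <> Q -> crs X Q Y <> 0 -> -1 < cs X Q Y.
Proof.
  intros H1 H2 Hc. unfold cs. rewrite pdist_prod.
  pose proof (sq_pos _ _ H1). pose proof (sq_pos _ _ H2).
  set (S := sq X Q * sq Y Q). assert (HS: 0 < S) by (unfold S; nra).
  pose proof (sqrt_lt_R0 _ HS). pose proof (sqrt_sqrt _ (Rlt_le _ _ HS)).
  pose proof (lagrange X Q Y). fold S in H5.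
  set (d := dotp X Q Y) in *. set (s := sqrt S) in *. set (c := crs X Q Y) in *.
  assert (0 < c^2) by (apply pow2_gt_0; auto).
  assert (-s < d) by nra.
  apply Rmult_lt_reg_r with s; auto; unfold Rdiv; rewrite Rmult_assoc, Rinv_l; lra.
Qed.

Lemma cs_eq1 X Q Y : X <> Q -> Y <> Q -> cs X Q Y = 1 -> crs X Q Y = 0 /\ 0 < dotp X Q Y.
Proof.
  intros H1 H2 Hc. unfold cs in Hc. rewrite pdist_prod in Hc.
  pose proof (sq_pos _ _ H1). pose proof (sq_pos _ _ H2).
  set (S := sq X Q * sq Y Q) in *. assert (HS: 0 < S) by (unfold S; nra).
  pose proof (sqrt_lt_R0 _ HS). pose proof (sqrt_sqrt _ (Rlt_le _ _ HS)).
  pose proof (lagrange X Q Y). fold S in H5.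
  set (d := dotp X Q Y) in *. set (s := sqrt S) in *. set (c := crs X Q Y) in *.
  assert (d = s) by (unfold Rdiv in Hc; apply Rmult_eq_reg_r with (/s);
     [rewrite Rinv_r; lra | apply Rinv_neq_0_compat; lra]).
  split; [|lra]. assert (c^2 = 0) by nra. nra.
Qed.

Lemma acos_lt x y : -1 <= x -> x < y -> y <= 1 -> acos y < acos x.
Proof.
  intros. destruct (acos_bound x), (acos_bound y).
  destruct (Rlt_le_dec (acos y) (acos x)) as [h|h]; auto.
  exfalso. destruct (Rle_lt_or_eq_dec _ _ h) as [h'|h'].
  - pose proof (cos_decreasing_1 (acos x) (acos y)) as C.
    rewrite !cos_acos in C by lra. assert (y < x) by (apply C; lra). lra.
  - assert (cos (acos x) = cos (acos y)) by (rewrite h'; auto).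
    rewrite !cos_acos in H6 by lra. lra.
Qed.

Definition qt (Q v : pt) (t : R) : pt := (fst Q + t * fst v, snd Q + t * snd v).

Lemma qt0 Q v : qt Q v 0 = Q.
Proof. destruct Q; unfold qt; simpl; f_equal; ring. Qed.

Lemma cont_pd Z Q v : continuity_pt (fun t => pdist Z (qt Q v t)) 0.
Proof.
  unfold pdist, qt; simpl. reg.
  pose proof (pow2_ge_0 (fst Z - (fst Q + 0 * fst v))).
  pose proof (pow2_ge_0 (snd Z - (snd Q + 0 * snd v))). lra.
Qed.

Lemma cont_cs Y W Q v : Y <> Q -> W <> Q ->
  continuity_pt (fun t => cs Y (qt Q v t) W) 0.
Proof.
  intros H1 H2.
  pose proof (pdist_pos _ _ H1). pose proof (pdist_pos _ _ H2).
  unfold cs, dotp.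
  apply continuity_pt_div.
  - unfold qt; simpl; reg.
  - apply continuity_pt_mult; apply cont_pd.
  - rewrite qt0. nra.
Qed.

Lemma ev f b : continuity_pt f 0 -> f 0 < b ->
  exists d, 0 < d /\ forall t, 0 < t < d -> f t < b.
Proof.
  intros Hc Hb. destruct (Hc (b - f 0)) as [d [Hd H]]; [lra|].
  exists d; split; auto. intros t Ht.
  assert (R_dist (f t) (f 0) < b - f 0).
  { apply H. split. { unfold D_x, no_cond; split; auto. lra. }
    simpl. unfold R_dist. rewrite Rabs_right; lra. }
  unfold R_dist in H0. apply Rabs_def2 in H0. lra.
Qed.

Lemma ev_gt f b : continuity_pt f 0 -> b < f 0 ->
  exists d, 0 < d /\ forall t, 0 < t < d -> b < f t.
Proof.
  intros Hc Hb. destruct (ev (fun t => - f t) (-b)) as [d [Hd H]].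
  - apply continuity_pt_opp; auto.
  - lra.
  - exists d; split; auto. intros t Ht. specialize (H t Ht). simpl in H. lra.
Qed.

Definition ff (a b : R) := a / sqrt (a ^ 2 + b ^ 2).

Lemma cs_ff X Q Y : cs X Q Y = ff (dotp X Q Y) (crs X Q Y).
Proof. unfold cs, ff. rewrite pdist_prod, <- lagrange. reflexivity. Qed.

Lemma ff_hom l a b : 0 < l -> ff (l * a) (l * b) = ff a b.
Proof.
  intros Hl. unfold ff.
  replace ((l*a)^2 + (l*b)^2) with (l^2 * (a^2+b^2)) by ring.
  rewrite sqrt_mult by (try apply pow2_ge_0; nra).
  rewrite sqrt_pow2 by lra.
  destruct (Req_dec (sqrt (a^2+b^2)) 0) as [E|E].
  - rewrite E, Rmult_0_r. unfold Rdiv. rewrite Rinv_0. ring.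
  - field. split; lra.
Qed.

Lemma ff_mono s p h : h <> 0 -> s < p -> ff s h < ff p h.
Proof.
  intros Hh Hsp. unfold ff.
  assert (H2: 0 < h^2) by (apply pow2_gt_0; auto).
  assert (0 < s^2 + h^2) by (pose proof (pow2_ge_0 s); lra).
  assert (0 < p^2 + h^2) by (pose proof (pow2_ge_0 p); lra).
  pose proof (sqrt_lt_R0 _ H). pose proof (sqrt_lt_R0 _ H0).
  pose proof (sqrt_sqrt _ (Rlt_le _ _ H)) as HA. pose proof (sqrt_sqrt _ (Rlt_le _ _ H0)) as HB.
  set (A := sqrt (s^2+h^2)) in *. set (B := sqrt (p^2+h^2)) in *.
  assert (s * B < p * A).
  { assert (Esb : (s*B)^2 = s^2*(p^2+h^2)) by (rewrite <- HB; ring).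
    assert (Epa : (p*A)^2 = p^2*(s^2+h^2)) by (rewrite <- HA; ring).
    destruct (Rle_lt_dec 0 s).
    - assert (s^2 < p^2) by nra.
      assert ((s*B)^2 < (p*A)^2) by (rewrite Esb, Epa; assert (0 < (p^2-s^2)*h^2) by (apply Rmult_lt_0_compat; lra); nra).
      assert (0 <= s*B) by (apply Rmult_le_pos; lra). assert (0 <= p*A) by (apply Rmult_le_pos; lra).
      destruct (Rlt_le_dec (s*B) (p*A)) as [ok|bad]; auto.
      assert ((p*A)^2 <= (s*B)^2) by (simpl; rewrite !Rmult_1_r; apply Rmult_le_compat; lra). lra.
    - destruct (Rle_lt_dec 0 p).
      + nra.
      + assert (p^2 < s^2) by nra.
        assert ((p*A)^2 < (s*B)^2) by (rewrite Esb, Epa; assert (0 < (s^2-p^2)*h^2) by (apply Rmult_lt_0_compat; lra); nra).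
        assert (s*B < 0) by (apply Rmult_neg_pos; lra). assert (p*A < 0) by (apply Rmult_neg_pos; lra).
        destruct (Rlt_le_dec (s*B) (p*A)) as [ok|bad]; auto.
        assert ((s*B)^2 <= (p*A)^2) by (replace ((p*A)^2) with ((-(p*A))*(-(p*A))) by ring; replace ((s*B)^2) with ((-(s*B))*(-(s*B))) by ring; apply Rmult_le_compat; lra). lra. }
  apply Rmult_lt_reg_r with (A * B). nra.
  unfold Rdiv. replace (s * / A * (A * B)) with (s * B) by (field; lra).
  replace (p * / B * (A * B)) with (p * A) by (field; lra). lra.
Qed.

Lemma toward_mono Y Q X t : X <> Q -> crs Y Q X <> 0 -> 0 < t < 1 ->
  cs Y (qt Q (fst X - fst Q, snd X - snd Q) t) X < cs Y Q X.
Proof.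
  intros HX Hc Ht. rewrite !cs_ff.
  set (Q' := qt Q (fst X - fst Q, snd X - snd Q) t).
  assert (E1 : dotp Y Q' X = (1 - t) * (dotp Y Q X - t * sq X Q)).
  { unfold Q', qt, dotp, sq; simpl; ring. }
  assert (E2 : crs Y Q' X = (1 - t) * crs Y Q X).
  { unfold Q', qt, crs; simpl; ring. }
  rewrite E1, E2, ff_hom by lra.
  apply ff_mono; auto. pose proof (sq_pos _ _ HX). nra.
Qed.

Definition EV (F : R -> Prop) := exists d, 0 < d /\ forall t, 0 < t < d -> F t.

Lemma EV_and F G : EV F -> EV G -> EV (fun t => F t /\ G t).
Proof.
  intros [d1 [h1 H1]] [d2 [h2 H2]]. exists (Rmin d1 d2). split.
  - apply Rmin_glb_lt; auto.
  - intros t Ht. pose proof (Rmin_l d1 d2). pose proof (Rmin_r d1 d2).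
    split; [apply H1|apply H2]; lra.
Qed.

Lemma EV_ex F : EV F -> exists t, 0 < t /\ F t.
Proof. intros [d [h H]]. exists (d/2). split; [lra|]. apply H; lra. Qed.

Lemma crs0 X Q Y : X <> Q -> Y <> Q -> crs X Q Y = 0 -> cs X Q Y = 1 \/ cs X Q Y = -1.
Proof.
  intros H1 H2 Hc. rewrite cs_ff, Hc. unfold ff.
  pose proof (lagrange X Q Y) as L. rewrite Hc in L.
  pose proof (sq_pos _ _ H1). pose proof (sq_pos _ _ H2).
  set (d := dotp X Q Y) in *.
  replace (d^2 + 0^2) with (d^2) by ring.
  assert (d <> 0) by (intro E; rewrite E in L; nra).
  destruct (Rlt_le_dec 0 d).
  - left. rewrite sqrt_pow2 by lra. field. auto.
  - right. replace (d^2) with ((-d)^2) by ring. rewrite sqrt_pow2 by lra. field. auto.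
Qed.

Lemma cs_ne_crs X Q Y : X <> Q -> Y <> Q -> -1 < cs X Q Y < 1 -> crs X Q Y <> 0.
Proof. intros H1 H2 H E. destruct (crs0 _ _ _ H1 H2 E); lra. Qed.

Lemma EV_pd P Q v r : pdist P Q < r -> EV (fun t => pdist P (qt Q v t) <= r).
Proof.
  intros H. destruct (ev _ r (cont_pd P Q v)) as [d [hd Hd]].
  - rewrite qt0; auto.
  - exists d; split; auto. intros t Ht; left; apply Hd; auto.
Qed.

Lemma EV_neq Y Q v : Y <> Q -> EV (fun t => Y <> qt Q v t).
Proof.
  intros H. destruct (ev_gt _ 0 (cont_pd Y Q v)) as [d [hd Hd]].
  - rewrite qt0; apply pdist_pos; auto.
  - exists d; split; auto. intros t Ht. apply pdist_neq, Hd, Ht.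
Qed.

Lemma EV_cs Y W Q v K : Y <> Q -> W <> Q -> cs Y Q W < K ->
  EV (fun t => cs Y (qt Q v t) W < K).
Proof.
  intros H1 H2 H. destruct (ev _ K (cont_cs Y W Q v H1 H2)) as [d [hd Hd]].
  - rewrite qt0; auto.
  - exists d; split; auto.
Qed.

Definition vto (Q X : pt) : pt := (fst X - fst Q, snd X - snd Q).

Lemma EV_toward Y Q X K : X <> Q -> Y <> Q -> cs Y Q X <= K -> K < 1 -> -1 < K ->
  EV (fun t => cs Y (qt Q (vto Q X) t) X < K).
Proof.
  intros HX HY Hle HK Hm. destruct (Req_dec (cs Y Q X) K) as [E|E].
  - exists 1; split; [lra|]. intros t Ht. rewrite <- E.
    apply toward_mono; auto. apply cs_ne_crs; auto. lra.
  - apply EV_cs; auto. lra.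
Qed.

Lemma toward_case P r Q X Y W K :
  pdist P Q < r -> X <> Q -> Y <> Q -> W <> Q -> K < 1 ->
  cs Y Q W < K -> cs Y Q X <= K -> cs X Q W <= K ->
  exists Q', pdist P Q' <= r /\ X <> Q' /\ Y <> Q' /\ W <> Q' /\
    cs Y Q' X < K /\ cs X Q' W < K /\ cs Y Q' W < K.
Proof.
  intros Hr HX HY HW HK H1 H2 H3.
  pose proof (cs_bounds _ _ _ HY HW).
  set (v := vto Q X).
  assert (E := EV_and _ _ (EV_pd P Q v r Hr)
    (EV_and _ _ (EV_neq X Q v HX) (EV_and _ _ (EV_neq Y Q v HY)
    (EV_and _ _ (EV_neq W Q v HW) (EV_and _ _ (EV_toward Y Q X K HX HY H2 HK ltac:(lra))
    (EV_and _ _ (EV_toward W Q X K HX HW ltac:(rewrite cs_sym; auto) HK ltac:(lra))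
      (EV_cs Y W Q v K HY HW H1))))))).
  destruct (EV_ex _ E) as [t [_ [h1 [h2 [h3 [h4 [h5 [h6 h7]]]]]]]].
  exists (qt Q v t). repeat split; auto. rewrite cs_sym; auto.
Qed.

Definition vrot (Q X : pt) : pt := (-(snd X - snd Q), fst X - fst Q).

Lemma crs_anti S Q T : crs S Q T = - crs T Q S.
Proof. unfold crs; ring. Qed.

Lemma crs_self S Q : crs S Q S = 0.
Proof. unfold crs; ring. Qed.

Lemma crs_trans A B C Q : B <> Q -> crs A Q B = 0 -> crs B Q C = 0 -> crs A Q C = 0.
Proof.
  intros HB h1 h2. pose proof (sq_pos _ _ HB) as Hs. unfold sq in Hs.
  destruct A as [a1 a2], B as [b1 b2], C as [c1 c2], Q as [q1 q2].
  unfold crs in *; simpl in *.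
  set (x1 := a1 - q1) in *. set (x2 := a2 - q2) in *.
  set (y1 := b1 - q1) in *. set (y2 := b2 - q2) in *.
  set (z1 := c1 - q1) in *. set (z2 := c2 - q2) in *.
  assert (E1 : (x1 * z2 - x2 * z1) * y1 = (x1 * y2 - x2 * y1) * z1 + (y1 * z2 - y2 * z1) * x1) by ring.
  assert (E2 : (x1 * z2 - x2 * z1) * y2 = (x1 * y2 - x2 * y1) * z2 + (y1 * z2 - y2 * z1) * x2) by ring.
  rewrite h1, h2 in E1, E2.
  destruct (Req_dec y1 0) as [Y1|Y1].
  - assert (y2 <> 0) by (intro; subst; rewrite Y1 in Hs; rewrite H in Hs; lra).
    apply Rmult_eq_reg_r with y2; auto. lra.
  - apply Rmult_eq_reg_r with y1; auto. lra.
Qed.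

Lemma rot_crs S T Q X t :
  crs S (qt Q (vrot Q X) t) T =
    crs S Q T - t * ((fst S - fst T) * (fst X - fst Q) + (snd S - snd T) * (snd X - snd Q)).
Proof. unfold crs, qt, vrot; simpl; ring. Qed.

Lemma rot_nz S T Q X : S <> T -> X <> Q -> crs S Q X = 0 -> crs T Q X = 0 ->
  (fst S - fst T) * (fst X - fst Q) + (snd S - snd T) * (snd X - snd Q) <> 0.
Proof.
  intros H1 H2 h1 h2 E.
  pose proof (sq_pos _ _ H1) as s1. pose proof (sq_pos _ _ H2) as s2.
  unfold sq, crs in *.
  destruct S as [a1 a2], T as [b1 b2], X as [c1 c2], Q as [q1 q2]; simpl in *.
  assert (L : ((a1 - b1) * (c1 - q1) + (a2 - b2) * (c2 - q2))^2 +
              ((a1-b1)*(c2-q2) - (a2-b2)*(c1-q1))^2 =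
              ((a1 - b1) ^ 2 + (a2 - b2) ^ 2) * ((c1 - q1) ^ 2 + (c2 - q2) ^ 2)) by ring.
  assert (C : (a1-b1)*(c2-q2) - (a2-b2)*(c1-q1) = 0) by lra.
  rewrite E, C in L. nra.
Qed.

Lemma EV_rot_pair S T Q X : S <> T -> S <> Q -> T <> Q -> X <> Q ->
  crs S Q T = 0 -> crs S Q X = 0 -> crs T Q X = 0 ->
  EV (fun t => cs S (qt Q (vrot Q X) t) T < 1).
Proof.
  intros HST HS HT HX h0 h1 h2.
  destruct (EV_and _ _ (EV_neq S Q (vrot Q X) HS) (EV_neq T Q (vrot Q X) HT)) as [d [hd H]].
  exists d; split; auto. intros t Ht. destruct (H t Ht).
  apply cs_lt1; auto. rewrite rot_crs, h0.
  pose proof (rot_nz S T Q X HST HX h1 h2).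
  intro E. assert (t * ((fst S - fst T) * (fst X - fst Q) + (snd S - snd T) * (snd X - snd Q)) = 0) by lra.
  apply Rmult_integral in H3. destruct H3; lra.
Qed.

Lemma rot_case P r Q X Y W :
  pdist P Q < r -> X <> Q -> Y <> Q -> W <> Q -> X <> Y -> Y <> W -> W <> X ->
  cs X Q Y = 1 ->
  exists Q', pdist P Q' <= r /\ X <> Q' /\ Y <> Q' /\ W <> Q' /\
    cs X Q' Y < 1 /\ cs Y Q' W < 1 /\ cs W Q' X < 1.
Proof.
  intros Hr HX HY HW D1 D2 D3 H1.
  destruct (cs_eq1 _ _ _ HX HY H1) as [cXY _].
  assert (cYX : crs Y Q X = 0) by (rewrite crs_anti, cXY; ring).
  set (v := vrot Q X).
  assert (EYW : EV (fun t => cs Y (qt Q v t) W < 1)).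
  { destruct (cs_bounds _ _ _ HY HW) as [_ b]. destruct (Req_dec (cs Y Q W) 1) as [E|E].
    - destruct (cs_eq1 _ _ _ HY HW E) as [cYW _].
      apply EV_rot_pair; auto.
      apply (crs_trans W Y X Q); auto. rewrite crs_anti, cYW; ring.
    - apply EV_cs; auto; lra. }
  assert (EWX : EV (fun t => cs W (qt Q v t) X < 1)).
  { destruct (cs_bounds _ _ _ HW HX) as [_ b]. destruct (Req_dec (cs W Q X) 1) as [E|E].
    - destruct (cs_eq1 _ _ _ HW HX E) as [cWX _].
      apply EV_rot_pair; auto. apply crs_self.
    - apply EV_cs; auto; lra. }
  assert (EXY : EV (fun t => cs X (qt Q v t) Y < 1)) by (apply EV_rot_pair; auto; apply crs_self).
  assert (E := EV_and _ _ (EV_pd P Q v r Hr)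
    (EV_and _ _ (EV_neq X Q v HX) (EV_and _ _ (EV_neq Y Q v HY)
    (EV_and _ _ (EV_neq W Q v HW) (EV_and _ _ EXY (EV_and _ _ EYW EWX)))))).
  destruct (EV_ex _ E) as [t [_ [h1 [h2 [h3 [h4 [h5 [h6 h7]]]]]]]].
  exists (qt Q v t). repeat split; auto.
Qed.

Lemma unit_lemma u1 u2 v1 v2 w1 w2 k :
  u1^2 + u2^2 = 1 -> v1^2 + v2^2 = 1 -> w1^2 + w2^2 = 1 ->
  u1*v1 + u2*v2 = k -> v1*w1 + v2*w2 = k -> w1*u1 + w2*u2 = k -> k < 1 ->
  k = -1/2 /\ u1*v2 - u2*v1 = v1*w2 - v2*w1 /\ v1*w2 - v2*w1 = w1*u2 - w2*u1.
Proof.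
  intros hu hv hw d1 d2 d3 hk.
  set (a := u1^2+u2^2) in *. set (b := v1^2+v2^2) in *. set (c := w1^2+w2^2) in *.
  assert (G : a*(b*c - (v1*w1 + v2*w2)^2) - (u1*v1 + u2*v2)*((u1*v1 + u2*v2)*c - (v1*w1 + v2*w2)*(w1*u1 + w2*u2))
     + (w1*u1 + w2*u2)*((u1*v1 + u2*v2)*(v1*w1 + v2*w2) - b*(w1*u1 + w2*u2)) = 0)
    by (unfold a, b, c; ring).
  rewrite hu, hv, hw, d1, d2, d3 in G.
  assert (F : (1-k)^2 * (1 + 2*k) = 0) by (rewrite <- G; ring).
  apply Rmult_integral in F. destruct F as [F|F].
  { exfalso. assert (1 - k <> 0) by lra. apply H. simpl in F. rewrite Rmult_1_r in F.
    apply Rmult_integral in F; tauto. }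
  assert (hk' : k = -1/2) by lra.
  assert (S : (u1+v1+w1)^2 + (u2+v2+w2)^2 = 0).
  { replace ((u1+v1+w1)^2 + (u2+v2+w2)^2) with
      ((u1^2+u2^2) + (v1^2+v2^2) + (w1^2+w2^2) + 2*(u1*v1+u2*v2) + 2*(v1*w1+v2*w2) + 2*(w1*u1+w2*u2)) by ring.
    fold a b c. rewrite hu, hv, hw, d1, d2, d3. lra. }
  pose proof (pow2_ge_0 (u1+v1+w1)). pose proof (pow2_ge_0 (u2+v2+w2)).
  assert (s1' : (u1+v1+w1)^2 = 0) by lra. assert (s2' : (u2+v2+w2)^2 = 0) by lra.
  assert (s1 : u1+v1+w1 = 0) by (simpl in *; rewrite Rmult_1_r in *; apply Rsqr_0_uniq; unfold Rsqr; auto).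
  assert (s2 : u2+v2+w2 = 0) by (simpl in *; rewrite Rmult_1_r in *; apply Rsqr_0_uniq; unfold Rsqr; auto).
  assert (W1 : w1 = -u1-v1) by lra. assert (W2 : w2 = -u2-v2) by lra.
  split; auto. rewrite W1, W2. split; ring.
Qed.

Lemma ccw_eq Q X Y : ccw_angle Q X Y =
  if Rle_dec 0 (crs X Q Y) then angle X Q Y else 2 * PI - angle X Q Y.
Proof. reflexivity. Qed.

Lemma ccw_pos Q X Y : 0 < crs X Q Y -> ccw_angle Q X Y = angle X Q Y.
Proof. intros h. rewrite ccw_eq. destruct (Rle_dec 0 (crs X Q Y)); auto. lra. Qed.

Lemma ccw_neg Q X Y : crs X Q Y < 0 -> ccw_angle Q X Y = 2 * PI - angle X Q Y.
Proof. intros h. rewrite ccw_eq. destruct (Rle_dec 0 (crs X Q Y)); auto. lra. Qed.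

Lemma unitsq x y n : 0 < n -> n * n = x^2 + y^2 -> (x/n)^2 + (y/n)^2 = 1.
Proof. intros h e. replace ((x/n)^2 + (y/n)^2) with ((x^2+y^2)/(n*n)) by (field; lra).
  rewrite <- e. field. lra. Qed.

Lemma allequal Q A B C k : A <> Q -> B <> Q -> C <> Q ->
  cs A Q B = k -> cs B Q C = k -> cs C Q A = k -> k < 1 ->
  ~ exactly_two_smallest (consecutive_angles Q A B C).
Proof.
  intros HA HB HC e1 e2 e3 hk.
  pose proof (pdist_pos _ _ HA) as pa. pose proof (pdist_pos _ _ HB) as pb.
  pose proof (pdist_pos _ _ HC) as pc.
  assert (KEY : k = -1/2 /\ exists X0, X0 <> 0 /\
     crs A Q B = pdist A Q * pdist B Q * X0 /\ crs B Q C = pdist B Q * pdist C Q * X0 /\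
     crs C Q A = pdist C Q * pdist A Q * X0).
  { pose proof (sqrt_sqrt _ (sq_nonneg A Q)) as qa.
  pose proof (sqrt_sqrt _ (sq_nonneg B Q)) as qb.
  pose proof (sqrt_sqrt _ (sq_nonneg C Q)) as qc.
  rewrite <- pdist_sq in qa, qb, qc.
  unfold crs.
  set (na := pdist A Q) in *. set (nb := pdist B Q) in *. set (nc := pdist C Q) in *.
  unfold cs in e1, e2, e3. fold na nb nc in e1, e2, e3.
  unfold sq, dotp in *.
  set (a1 := fst A - fst Q) in *. set (a2 := snd A - snd Q) in *.
  set (b1 := fst B - fst Q) in *. set (b2 := snd B - snd Q) in *.
  set (c1 := fst C - fst Q) in *. set (c2 := snd C - snd Q) in *.
  assert (ua : (a1/na)^2 + (a2/na)^2 = 1) by (apply unitsq; auto).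
  assert (ub : (b1/nb)^2 + (b2/nb)^2 = 1) by (apply unitsq; auto).
  assert (uc : (c1/nc)^2 + (c2/nc)^2 = 1) by (apply unitsq; auto).
  assert (d1 : a1/na * (b1/nb) + a2/na * (b2/nb) = k) by (rewrite <- e1; field; lra).
  destruct (unit_lemma (a1/na) (a2/na) (b1/nb) (b2/nb) (c1/nc) (c2/nc) k)
    as [hk2 [x1 x2]]; auto.
  rewrite <- e2; field; lra. rewrite <- e3; field; lra.
  split; auto.
  exists (a1 / na * (b2 / nb) - a2 / na * (b1 / nb)). split; [|split; [|split]].
  - intro E. assert (L : (a1/na * (b1/nb) + a2/na * (b2/nb))^2 + (a1 / na * (b2 / nb) - a2 / na * (b1 / nb))^2
        = ((a1/na)^2 + (a2/na)^2) * ((b1/nb)^2 + (b2/nb)^2)) by ring.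
    rewrite d1, E, ua, ub, hk2 in L. lra.
  - field; lra.
  - rewrite x1. field; lra.
  - rewrite x1, x2. field; lra. }
  destruct KEY as [hk2 [X0 [hX [c1 [c2 c3]]]]].
  assert (c4 : crs A Q C = - (pdist C Q * pdist A Q * X0)) by (rewrite crs_anti, c3; ring).
  assert (c5 : crs C Q B = - (pdist B Q * pdist C Q * X0)) by (rewrite crs_anti, c2; ring).
  set (m := acos k).
  assert (mb : 0 < m < PI) by (apply acos_bound_lt; lra).
  assert (g1 : angle A Q B = m) by (rewrite angle_cs, e1; auto).
  assert (g2 : angle B Q C = m) by (rewrite angle_cs, e2; auto).
  assert (g3 : angle A Q C = m) by (rewrite angle_sym, angle_cs, e3; auto).
  assert (g4 : angle C Q B = m) by (rewrite angle_sym, angle_cs, e2; auto).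
  assert (pp : 0 < pdist A Q * pdist B Q /\ 0 < pdist B Q * pdist C Q /\ 0 < pdist C Q * pdist A Q)
    by (repeat split; apply Rmult_lt_0_compat; auto).
  unfold consecutive_angles, exactly_two_smallest.
  destruct (Rlt_le_dec 0 X0) as [h|h].
  - rewrite (ccw_pos Q A B), (ccw_pos Q B C), (ccw_neg Q A C), (ccw_neg Q C B), g1, g2, g3, g4
      by (rewrite ?c1, ?c2, ?c4, ?c5; nra).
    destruct (Rle_dec m (2 * PI - m)); lra.
  - assert (X0 < 0) by lra.
    rewrite (ccw_neg Q A B), (ccw_neg Q B C), (ccw_pos Q A C), (ccw_pos Q C B), g1, g2, g3, g4
      by (rewrite ?c1, ?c2, ?c4, ?c5; nra).
    destruct (Rle_dec (2 * PI - m) m); lra.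
Qed.

Theorem lemma1 (P A B C Pstar : pt) (r : R) :
  0 < r ->
  A <> B -> B <> C -> C <> A ->
  max_min_angle_solution P A B C r Pstar ->
  exactly_two_smallest (consecutive_angles Pstar A B C) ->
  pdist P Pstar = r.
Proof.
  intros hr hAB hBC hCA [hd [[n1 [n2 n3]] hopt]] H2.
  destruct (Rle_lt_or_eq_dec _ _ hd) as [hlt|]; auto. exfalso.
  set (Q := Pstar) in *.
  assert (HA : A <> Q) by auto. assert (HB : B <> Q) by auto. assert (HC : C <> Q) by auto.
  set (K := Rmax (cs A Q B) (Rmax (cs B Q C) (cs C Q A))).
  pose proof (cs_bounds _ _ _ HA HB) as bAB.
  pose proof (cs_bounds _ _ _ HB HC) as bBC.
  pose proof (cs_bounds _ _ _ HC HA) as bCA.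
  assert (kA : cs A Q B <= K) by (apply Rmax_l).
  assert (kB : cs B Q C <= K) by (eapply Rle_trans; [apply Rmax_l|apply Rmax_r]).
  assert (kC : cs C Q A <= K) by (eapply Rle_trans; [apply Rmax_r|apply Rmax_r]).
  assert (Kone : K = cs A Q B \/ K = cs B Q C \/ K = cs C Q A).
  { unfold K, Rmax. destruct (Rle_dec (cs B Q C) (cs C Q A));
    destruct (Rle_dec (cs A Q B) _); auto. }
  assert (K1 : K <= 1) by (destruct Kone as [e|[e|e]]; lra).
  assert (FIN : forall Q', pdist P Q' <= r -> A <> Q' -> B <> Q' -> C <> Q' ->
     cs A Q' B < K -> cs B Q' C < K -> cs C Q' A < K -> False).
  { intros Q' h0 h1 h2 h3 h4 h5 h6.
    assert (M : min_angle Q' A B C <= min_angle Q A B C).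
    { apply hopt; auto. repeat split; auto. }
    assert (M1 : min_angle Q A B C <= acos K).
    { unfold min_angle. rewrite !angle_cs, (cs_sym C Q A) in *.
      destruct Kone as [e|[e|e]]; rewrite e.
      - apply Rmin_l.
      - eapply Rle_trans; [apply Rmin_r|apply Rmin_l].
      - rewrite (cs_sym A Q C). eapply Rle_trans; [apply Rmin_r|apply Rmin_r]. }
    assert (M2 : acos K < min_angle Q' A B C).
    { unfold min_angle. rewrite !angle_cs.
      pose proof (cs_bounds _ _ _ h1 h2). pose proof (cs_bounds _ _ _ h2 h3).
      pose proof (cs_bounds _ _ _ h3 h1).
      apply Rmin_glb_lt; [|apply Rmin_glb_lt]; apply acos_lt; lra. }
    lra. }
  destruct (Rle_lt_or_eq_dec _ _ K1) as [Klt|Keq].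
  - destruct (Rlt_le_dec (cs A Q B) K) as [l1|l1].
    + destruct (toward_case P r Q C B A K) as [Q' [h0 [h1 [h2 [h3 [h4 [h5 h6]]]]]]]; auto.
      rewrite cs_sym; auto.
      apply (FIN Q'); auto. rewrite cs_sym; auto.
    + destruct (Rlt_le_dec (cs B Q C) K) as [l2|l2].
      * destruct (toward_case P r Q A C B K) as [Q' [h0 [h1 [h2 [h3 [h4 [h5 h6]]]]]]]; auto.
        rewrite cs_sym; auto.
        apply (FIN Q'); auto. rewrite cs_sym; auto.
      * destruct (Rlt_le_dec (cs C Q A) K) as [l3|l3].
        -- destruct (toward_case P r Q B A C K) as [Q' [h0 [h1 [h2 [h3 [h4 [h5 h6]]]]]]]; auto.
           rewrite cs_sym; auto.
           apply (FIN Q'); auto. rewrite cs_sym; auto.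
        -- apply (allequal Q A B C K); auto; lra.
  - destruct Kone as [e|[e|e]].
    + destruct (rot_case P r Q A B C) as [Q' [h0 [h1 [h2 [h3 [h4 [h5 h6]]]]]]]; auto; try lra.
      apply (FIN Q'); auto; lra.
    + destruct (rot_case P r Q B C A) as [Q' [h0 [h1 [h2 [h3 [h4 [h5 h6]]]]]]]; auto; try lra.
      apply (FIN Q'); auto; lra.
    + destruct (rot_case P r Q C A B) as [Q' [h0 [h1 [h2 [h3 [h4 [h5 h6]]]]]]]; auto; try lra.
      apply (FIN Q'); auto; lra.
Qed.
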